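(* Let $A$ be a unital C*-algebra that admits a unital $*$-homomorphism $Z_{2,3}\to A$. Then $\xi(A)\leq6$. This applies in particular to all unital $\mathcal{Z}$-stable C*-algebras (unital C*-algebras $A$ with $A\cong A\otimes\mathcal{Z}$, where $\mathcal{Z}$ is the Jiang–Su algebra).
   Context: The dimension drop algebra is $Z_{2,3}=\{f\colon[0,1]\to M_2(\mathbb{C})\otimes M_3(\mathbb{C})\text{ continuous}: f(0)\in M_2(\mathbb{C})\otimes 1,\ f(1)\in 1\otimes M_3(\mathbb{C})\}$. For a unital ring $T$ generated by its commutators, $\xi(T)$ is the minimal $N\in\mathbb{N}$ such that every element of $T$ is a sum of $N$ elements of the form $[b,c][d,e]$ with $b,c,d,e\in T$, where $[x,y]=xy-yx$. *)

(* Defs.v *)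
From HB Require Import structures.
From mathcomp Require Import all_boot all_order all_algebra.
From mathcomp Require Import complex mxtens.
From mathcomp Require Import all_classical all_reals topology normedtype.
Set Implicit Arguments. Unset Strict Implicit. Unset Printing Implicit Defensive.
Import Order.TTheory GRing.Theory Num.Theory.
Import numFieldTopology.Exports numFieldNormedType.Exports.
Local Open Scope ring_scope.

Definition is_unital_Cstar_algebra (R : realType) (A : algType R[i])
    (st : A -> A) (nrm : A -> R) : Prop :=
  [/\
      [/\ (forall x y : A, st (x + y) = st x + st y),
          (forall (l : R[i]) (x : A), st (l *: x) = (conjc l) *: st x),
          (forall x y : A, st (x * y) = st y * st x) &
          (forall x : A, st (st x) = x)],
      [/\ (forall x : A, 0 <= nrm x /\ (nrm x = 0 <-> x = 0)),
          (forall x y : A, nrm (x + y) <= nrm x + nrm y),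
          (forall (l : R[i]) (x : A), nrm (l *: x) = Normc.normc l * nrm x) &
          (forall x y : A, nrm (x * y) <= nrm x * nrm y)],
      (forall x : A, nrm (st x * x) = nrm x ^+ 2) &
      (forall u : nat -> A,
         (forall e : R, 0 < e -> exists N : nat, forall m n : nat,
            (N <= m)%N -> (N <= n)%N -> nrm (u m - u n) < e) ->
         exists l : A, forall e : R, 0 < e -> exists N : nat, forall n : nat,
            (N <= n)%N -> nrm (u n - l) < e)].

(* M_2(C) (x) M_3(C) is 'M[R[i]]_(2*3) via the Kronecker product *t.       *)
(* An element f : [0,1] -> M_2 (x) M_3 is represented by its extension to   *)
(* R that is constant on (-oo,0] and on [1,+oo); this is a bijection with   *)
(* the continuous functions on [0,1], compatible with all operations.       *)
Definition Mx6 (R : realType) := 'M[R[i]]_(2 * 3).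

Definition mx_continuous (R : realType) (f : R -> Mx6 R) : Prop :=
  forall i j : 'I_(2 * 3),
    continuous (fun t : R => complex.Re (f t i j)) /\
    continuous (fun t : R => complex.Im (f t i j)).

Definition in_Z23 (R : realType) (f : R -> Mx6 R) : Prop :=
  [/\ mx_continuous f,
      (forall t : R, t <= 0 -> f t = f 0),
      (forall t : R, 1 <= t -> f t = f 1),
      (exists a : 'M[R[i]]_2, f 0 = a *t (1%:M : 'M[R[i]]_3)) &
      (exists b : 'M[R[i]]_3, f 1 = (1%:M : 'M[R[i]]_2) *t b)].

Definition Zadd (R : realType) (f g : R -> Mx6 R) : R -> Mx6 R :=
  fun t => f t + g t.
Definition Zmul (R : realType) (f g : R -> Mx6 R) : R -> Mx6 R :=
  fun t => f t *m g t.
Definition Zscale (R : realType) (l : R[i]) (f : R -> Mx6 R) : R -> Mx6 R :=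
  fun t => l *: f t.
Definition Zstar (R : realType) (f : R -> Mx6 R) : R -> Mx6 R :=
  fun t => map_mx (@conjc R) (f t)^T.
Definition Zone (R : realType) : R -> Mx6 R := fun _ => 1%:M.

Definition unital_star_hom_from_Z23 (R : realType) (A : algType R[i])
    (st : A -> A) (phi : (R -> Mx6 R) -> A) : Prop :=
  [/\ (forall f g, in_Z23 f -> in_Z23 g -> phi (Zadd f g) = phi f + phi g),
      (forall f g, in_Z23 f -> in_Z23 g -> phi (Zmul f g) = phi f * phi g),
      (forall l f, in_Z23 f -> phi (Zscale l f) = l *: phi f),
      (forall f, in_Z23 f -> phi (Zstar f) = st (phi f)) &
      phi (@Zone R) = 1].

Definition commr (T : pzRingType) (x y : T) : T := x * y - y * x.

Definition sum_of_comm_prods (T : pzRingType) (N : nat) (a : T) : Prop :=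
  exists b c d e : 'I_N -> T,
    a = \sum_(k < N) commr (b k) (c k) * commr (d k) (e k).

(* xi(T) <= N : every element of T is a sum of N products of two commutators.
   (This forces T to be generated by its commutators, so xi(T) is defined,
   and the minimal such N is then <= N.) *)
Definition xi_le (T : pzRingType) (N : nat) : Prop :=
  forall a : T, sum_of_comm_prods N a.

(* Main.v *)
Require Import Defs.
From HB Require Import structures.
From mathcomp Require Import all_boot all_order all_algebra.
From mathcomp Require Import complex mxtens.
From mathcomp Require Import all_classical all_reals topology normedtype.
Local Open Scope ring_scope.

(* We exhibit 22 explicit
   elements of Z_{2,3} (piecewise-linear paths of 6x6 integer matrices,
   conjugated at the end by an explicit path of shears) such that, for
   every a, a = sum_{k<5} [g_k,h_k][u_k, e_i a f_k]; identities between the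
   elements are checked by computation on integer tables. *)
Set Implicit Arguments. Unset Strict Implicit. Unset Printing Implicit Defensive.
Import Order.TTheory GRing.Theory Num.Theory.
Import numFieldTopology.Exports numFieldNormedType.Exports.

Definition sp := seq (nat * nat * int).
Definition eldata := (sp * seq (nat * sp))%type.

Definition sget (S : sp) (i j : nat) : int :=
  foldr (fun p acc => if (p.1.1 == i) && (p.1.2 == j) then p.2 + acc else acc) 0 S.

Lemma sget_cat S T i j : sget (S ++ T) i j = sget S i j + sget T i j.
Proof.
elim: S => [|[[a b] v] S IH] /=; first by rewrite add0r.
by rewrite IH; case: ifP => _ //; rewrite addrA.
Qed.

Definition poly := seq int.
Fixpoint padd (p q : poly) : poly :=
  match p, q with
  | [::], _ => q
  | _, [::] => p
  | a :: p', b :: q' => (a + b) :: padd p' q'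
  end.
Fixpoint pmul (p q : poly) : poly :=
  match p with
  | [::] => [::]
  | a :: p' => padd (map (fun b => a * b) q) (0 :: pmul p' q)
  end.
Definition popp (p : poly) : poly := map (fun a => - a) p.
Definition pzero (p : poly) : bool := all (fun a => a == 0) p.

Definition ptab := seq (seq poly).
Definition tget (T : ptab) (i j : nat) : poly := nth [::] (nth [::] T i) j.
Definition tmk (f : nat -> nat -> poly) : ptab := mkseq (fun i => mkseq (f i) 6) 6.
Definition tadd (T U : ptab) : ptab := tmk (fun i j => padd (tget T i j) (tget U i j)).
Definition topp (T : ptab) : ptab := tmk (fun i j => popp (tget T i j)).
Definition tsub (T U : ptab) : ptab := tadd T (topp U).
Fixpoint psum (l : seq poly) : poly := if l is p :: l' then padd p (psum l') else [::].
Definition tmul (T U : ptab) : ptab :=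
  tmk (fun i j => psum (mkseq (fun k => pmul (tget T i k) (tget U k j)) 6)).
Definition tlin (A B : sp) : ptab := tmk (fun i j => [:: sget A i j; sget B i j]).
Definition tid : ptab := tmk (fun i j => [:: (i == j)%:Z]).
Definition tzero : ptab := tmk (fun i j => [::]).
Definition teqb (T U : ptab) : bool :=
  all (fun i => all (fun j => pzero (padd (tget T i j) (popp (tget U i j)))) (iota 0 6)) (iota 0 6).

Definition slotA (d : eldata) (k : nat) : sp :=
  d.1 ++ flatten [seq p.2 | p <- d.2 & (p.1 < k)%N].
Definition slotB (d : eldata) (k : nat) : sp :=
  flatten [seq p.2 | p <- d.2 & p.1 == k].
Definition slotT (d : eldata) (k : nat) : ptab := tlin (slotA d k) (slotB d k).

Definition NSLOT : nat := 23%N.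
Definition allslots (P : nat -> bool) := all P (iota 0 NSLOT).

Definition chk_cue (g h u e : eldata) : bool :=
  allslots (fun k => teqb (tmul (tsub (tmul (slotT g k) (slotT h k)) (tmul (slotT h k) (slotT g k)))
     (tmul (slotT u k) (slotT e k))) (slotT e k)).
Definition chk_fu (f u : eldata) : bool :=
  allslots (fun k => teqb (tmul (slotT f k) (slotT u k)) tzero).
Definition chk_sum2 (a b : eldata) : bool :=
  allslots (fun k => teqb (tadd (slotT a k) (slotT b k)) tid).
Definition chk_sum3 (a b c : eldata) : bool :=
  allslots (fun k => teqb (tadd (tadd (slotT a k) (slotT b k)) (slotT c k)) tid).
Definition d_e1 : eldata := ([:: (0, 0, Posz 1); (1, 1, Posz 1); (2, 2, Posz 1)],
  [:: (11, [:: (2, 2, Negz 0)])]).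

Definition d_e2 : eldata := ([:: (3, 3, Posz 1); (4, 4, Posz 1); (5, 5, Posz 1)],
  [:: (11, [:: (2, 2, Posz 1)])]).

Definition d_f11 : eldata := ([:: (3, 3, Posz 1); (4, 4, Posz 1); (5, 5, Posz 1)],
  [:: (13, [:: (2, 2, Posz 1)])]).

Definition d_f12 : eldata := ([:: (0, 0, Posz 1); (1, 1, Posz 1); (2, 2, Posz 1)],
  [:: (13, [:: (2, 2, Negz 0)])]).

Definition d_f21 : eldata := ([:: (0, 0, Posz 1); (1, 1, Posz 1); (2, 2, Posz 1)],
  [:: (5, [:: (2, 2, Negz 0)])]).

Definition d_f22 : eldata := ([:: (3, 3, Posz 1); (4, 4, Posz 1); (5, 5, Posz 1)],
  [:: (5, [:: (5, 5, Negz 0)])]).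

Definition d_f23 : eldata := ([::],
  [:: (5, [:: (2, 2, Posz 1); (5, 5, Posz 1)])]).

Definition d_u11 : eldata := ([:: (0, 0, Posz 1); (1, 1, Posz 1); (2, 2, Posz 1)],
  [:: (12, [:: (2, 2, Negz 0)])]).

Definition d_u12 : eldata := ([:: (3, 0, Negz 0); (4, 1, Negz 0); (5, 2, Negz 0)],
  [:: (16, [:: (5, 2, Posz 1)])]).

Definition d_u21 : eldata := ([:: (3, 3, Posz 1); (4, 4, Posz 1); (5, 5, Posz 1)],
  [:: (8, [:: (2, 2, Posz 1)])]).

Definition d_u22 : eldata := ([:: (0, 3, Negz 0); (1, 4, Negz 0); (2, 5, Negz 0)],
  [:: (8, [:: (2, 2, Posz 1); (2, 5, Posz 1); (5, 5, Posz 1)])]).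

Definition d_u23 : eldata := ([:: (0, 3, Negz 0); (1, 4, Negz 0); (2, 5, Negz 0)],
  [:: (2, [:: (2, 5, Posz 1); (3, 2, Negz 0); (4, 5, Posz 1)])]).

Definition d_g11 : eldata := ([:: (0, 3, Negz 0); (1, 4, Negz 0); (2, 5, Negz 0)],
  [:: (15, [:: (2, 5, Posz 1)])]).

Definition d_h11 : eldata := ([:: (3, 0, Negz 0); (4, 1, Negz 0); (5, 2, Negz 0)],
  [:: (14, [:: (5, 2, Posz 1)])]).

Definition d_g12 : eldata := ([:: (0, 0, Posz 1); (1, 1, Posz 1); (2, 2, Posz 1)],
  [:: (15, [:: (2, 2, Negz 0)])]).

Definition d_h12 : eldata := ([:: (0, 3, Negz 0); (1, 4, Negz 0); (2, 5, Negz 0)],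
  [:: (14, [:: (2, 5, Posz 1)])]).

Definition d_g21 : eldata := ([:: (3, 0, Negz 0); (4, 1, Negz 0); (5, 2, Negz 0)],
  [:: (7, [:: (0, 2, Negz 0); (1, 5, Posz 1); (5, 2, Posz 1)])]).

Definition d_h21 : eldata := ([:: (0, 3, Negz 0); (1, 4, Negz 0); (2, 5, Negz 0)],
  [:: (6, [:: (0, 1, Posz 1); (5, 1, Negz 0)]);
     (10, [:: (0, 1, Negz 0); (2, 0, Posz 1); (2, 5, Posz 1)])]).

Definition d_g22 : eldata := ([:: (3, 3, Posz 1); (4, 4, Posz 1); (5, 5, Posz 1)],
  [:: (7, [:: (0, 0, Negz 0); (1, 1, Negz 0); (1, 2, Negz 0); (2, 2, Negz 0); (3, 3, Negz 0); (4, 4, Negz 0); (4, 5, Negz 0); (5, 5, Negz 0)]);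
     (9, [:: (0, 0, Posz 1); (1, 1, Posz 1); (1, 2, Posz 1); (2, 2, Posz 1); (3, 2, Posz 1); (3, 3, Posz 1); (4, 4, Posz 1)])]).

Definition d_h22 : eldata := ([:: (3, 0, Negz 0); (4, 1, Negz 0); (5, 2, Negz 0)],
  [:: (6, [:: (5, 4, Posz 1)]);
     (10, [:: (2, 3, Negz 0); (5, 2, Posz 1)])]).

Definition d_g23 : eldata := ([:: (3, 3, Posz 1); (4, 4, Posz 1); (5, 5, Posz 1)],
  [:: (1, [:: (0, 0, Negz 0); (1, 1, Negz 1); (2, 2, Negz 0); (3, 3, Negz 0); (4, 4, Negz 1); (5, 5, Negz 0)]);
     (3, [:: (0, 0, Posz 1); (1, 1, Posz 2); (2, 2, Posz 3); (3, 3, Posz 1); (4, 4, Posz 2); (5, 5, Posz 2)])]).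

Definition d_h23 : eldata := ([:: (3, 0, Negz 0); (4, 1, Negz 0); (5, 2, Negz 0)],
  [:: (0, [:: (5, 4, Posz 1)]);
     (4, [:: (2, 3, Negz 0); (5, 2, Posz 1)])]).
Section Eval.
Variable R : realType.
Local Notation C := R[i].
Definition i2c (z : int) : C := z%:~R.
Definition peval (x : C) (p : poly) : C := foldr (fun c acc => i2c c + x * acc) 0 p.

Lemma peval_add x p q : peval x (padd p q) = peval x p + peval x q.
Proof.
elim: p q => [|a p IH] [|b q] /=; rewrite ?add0r ?addr0 //.
by rewrite IH /i2c intrD mulrDr addrACA.
Qed.

Lemma peval_map x a q : peval x (map (fun b => a * b) q) = i2c a * peval x q.
Proof.
elim: q => [|b q IH] /=; first by rewrite mulr0.
by rewrite IH /i2c intrM mulrDr mulrCA.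
Qed.

Lemma peval_mul x p q : peval x (pmul p q) = peval x p * peval x q.
Proof.
elim: p => [|a p IH] /=; first by rewrite mul0r.
by rewrite peval_add peval_map /= IH /i2c mulr0z add0r mulrDl mulrA.
Qed.

Lemma peval_opp x p : peval x (popp p) = - peval x p.
Proof.
elim: p => [|a p IH] /=; first by rewrite oppr0.
by rewrite IH /i2c intrN mulrN opprD.
Qed.

Lemma peval_zero x p : pzero p -> peval x p = 0.
Proof.
elim: p => [|a p IH] //= /andP[/eqP -> /IH ->].
by rewrite /i2c mulr0 addr0.
Qed.

Lemma peval_psum x l : peval x (psum l) = \sum_(p <- l) peval x p.
Proof.
elim: l => [|p l IH] /=; first by rewrite big_nil.
by rewrite big_cons peval_add IH.
Qed.

Definition mxev (x : C) (T : ptab) : 'M[C]_(2 * 3) := \matrix_(i, j) peval x (tget T i j).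
Definition gmx (S : sp) : 'M[C]_(2 * 3) := \matrix_(i, j) i2c (sget S i j).

Lemma tget_mk f (i j : 'I_(2 * 3)) : tget (tmk f) i j = f i j.
Proof.
rewrite /tget /tmk nth_mkseq ?nth_mkseq //.
Qed.

Lemma mxev_add x T U : mxev x (tadd T U) = mxev x T + mxev x U.
Proof. by apply/matrixP=> i j; rewrite !mxE tget_mk peval_add. Qed.

Lemma mxev_opp x T : mxev x (topp T) = - mxev x T.
Proof. by apply/matrixP=> i j; rewrite !mxE tget_mk peval_opp. Qed.

Lemma mxev_sub x T U : mxev x (tsub T U) = mxev x T - mxev x U.
Proof. by rewrite /tsub mxev_add mxev_opp. Qed.

Lemma mxev_mul x T U : mxev x (tmul T U) = mxev x T *m mxev x U.
Proof.
apply/matrixP=> i j; rewrite !mxE tget_mk peval_psum /mkseq big_map.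
change (iota 0 6) with (index_iota 0 6); rewrite big_mkord; apply: eq_bigr => k _.
by rewrite peval_mul !mxE.
Qed.

Lemma mxev_eq x T U : teqb T U -> mxev x T = mxev x U.
Proof.
move=> /allP H; apply/matrixP=> i j; rewrite !mxE.
have Hi6 : forall k : 'I_(2 * 3), (k : nat) \in iota 0 6 by move=> k; rewrite mem_iota /=.
have /allP Hi := H i (Hi6 i).
have /peval_zero Z := Hi j (Hi6 j).
by move: (Z x); rewrite peval_add peval_opp => /eqP; rewrite subr_eq0 => /eqP.
Qed.

Lemma mxev_lin x A B : mxev x (tlin A B) = gmx A + x *: gmx B.
Proof.
by apply/matrixP=> i j; rewrite !mxE tget_mk /= mulr0 addr0.
Qed.

Lemma mxev_id x : mxev x tid = 1%:M.
Proof. by apply/matrixP=> i j; rewrite !mxE tget_mk /= mulr0 addr0 /i2c. Qed.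

Lemma mxev_zero x : mxev x tzero = 0.
Proof. by apply/matrixP=> i j; rewrite !mxE tget_mk. Qed.

Lemma gmx_cat S T : gmx (S ++ T) = gmx S + gmx T.
Proof. by apply/matrixP=> i j; rewrite !mxE sget_cat /i2c intrD. Qed.

Lemma gmx_nil : gmx [::] = 0.
Proof. by apply/matrixP=> i j; rewrite !mxE. Qed.

Lemma gmx_flatten (l : seq sp) : gmx (flatten l) = \sum_(S <- l) gmx S.
Proof.
elim: l => [|S l IH] /=; first by rewrite big_nil gmx_nil.
by rewrite big_cons gmx_cat IH.
Qed.

End Eval.
Section PartB.
Variable R : realType.
Local Notation C := R[i].
Local Notation gmx := (@gmx R).
Local Notation mxev := (@mxev R).

Definition toC (x : R) : C := Complex x 0.
Lemma toC0 : toC 0 = 0. Proof. by []. Qed.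
Lemma toC1 : toC 1 = 1. Proof. by []. Qed.
Lemma toCN x : toC (- x) = - toC x.
Proof. by rewrite /toC /GRing.opp /= oppr0. Qed.

Definition clamp (y : R) : R := Num.max 0 (Num.min 1 y).
Lemma clamp_le0 y : y <= 0 -> clamp y = 0.
Proof.
move=> hy; rewrite /clamp (@min_r _ _ 1 y) ?max_l //.
by apply: (le_trans hy).
Qed.
Lemma clamp_ge1 y : 1 <= y -> clamp y = 1.
Proof. by move=> hy; rewrite /clamp (@min_l _ _ 1 y) // max_r. Qed.
Lemma clamp_mid y : 0 <= y -> y <= 1 -> clamp y = y.
Proof. by move=> h0 h1; rewrite /clamp (@min_r _ _ 1 y) // max_r. Qed.
Lemma clamp_ge0 y : 0 <= clamp y.
Proof. by rewrite /clamp le_max lexx. Qed.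
Lemma clamp_le1 y : clamp y <= 1.
Proof. by rewrite /clamp ge_max ler01 ge_min lexx. Qed.

Definition rho (k : nat) (t : R) : R := clamp (NSLOT%:R * clamp t - k%:R).

Lemma exists_slot (n : nat) (y : R) : 0 <= y -> y <= n.+1%:R ->
  exists k, (k <= n)%N /\ k%:R <= y /\ y <= k.+1%:R.
Proof.
elim: n y => [|n IH] y h0 h1; first by exists 0%N; rewrite h0 h1.
case: (leP y n.+1%:R) => hy.
  by have [k [hk H]] := IH y h0 hy; exists k; split => //; apply: leqW.
by exists n.+1; split => //; split => //; apply: ltW.
Qed.

Definition slotted (r : nat -> R) (k : nat) (l : R) :=
  forall j, r j = if (j < k)%N then 1 else if j == k then l else 0.

Lemma rho_slot t : exists k, (k < NSLOT)%N /\ exists l, slotted (rho^~ t) k l.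
Proof.
have h0 : 0 <= NSLOT%:R * clamp t by rewrite mulr_ge0 ?clamp_ge0.
have h1 : NSLOT%:R * clamp t <= (22.+1)%:R.
  by rewrite -[X in _ <= X]mulr1 ler_wpM2l ?clamp_le1.
have [k [hk [hk0 hk1]]] := exists_slot h0 h1.
exists k; split; first by [].
exists (rho k t) => j; rewrite /rho.
case: (ltnP j k) => hjk.
  apply: clamp_ge1; rewrite lerBrDr addrC natr1.
  by apply: le_trans hk0; rewrite ler_nat.
case: eqP => [->|/eqP hne] //.
apply: clamp_le0; rewrite subr_le0; apply: (le_trans hk1).
by rewrite ler_nat ltn_neqAle eq_sym hne hjk.
Qed.

Definition inner (d : eldata) (r : nat -> R) : 'M[C]_(2 * 3) :=
  gmx d.1 + \sum_(p <- d.2) toC (r p.1) *: gmx p.2.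

Lemma inner_slot d r k l : slotted r k l ->
  inner d r = mxev (toC l) (slotT d k).
Proof.
move=> hr; rewrite /slotT mxev_lin /inner /slotA /slotB gmx_cat -addrA; congr (_ + _).
elim: d.2 => [|p s IH] /=; first by rewrite !big_nil gmx_nil scaler0 addr0.
rewrite big_cons IH hr.
case: (ltngtP p.1 k) => hp /=.
- by rewrite gmx_cat toC1 scale1r addrA.
- by rewrite toC0 scale0r add0r.
- by rewrite gmx_cat scalerDr addrCA.
Qed.
End PartB.
Section PartC.
Variable R : realType.
Local Notation C := R[i].

Lemma cD (f g : R -> R) : continuous f -> continuous g -> continuous (fun x => f x + g x).
Proof. by move=> hf hg x; exact: (@continuousD R R^o R f g x (hf x) (hg x)). Qed.
Lemma cM (f g : R -> R) : continuous f -> continuous g -> continuous (fun x => f x * g x).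
Proof. move=> hf hg x; exact: cvgM (hf x) (hg x). Qed.
Lemma cN (f : R -> R) : continuous f -> continuous (fun x => - f x).
Proof. by move=> hf x; exact: (@continuousN R R^o R f x (hf x)). Qed.
Lemma cC (c : R) : continuous (fun _ : R => c).
Proof. by move=> x; apply: cst_continuous. Qed.
Lemma cI : continuous (fun x : R => x).
Proof. by move=> x; exact: cvg_id. Qed.
Lemma cMax (f g : R -> R) : continuous f -> continuous g -> continuous (fun x => Num.max (f x) (g x)).
Proof. by move=> hf hg x; exact: (continuous_max (hf x) (hg x)). Qed.
Lemma cMin (f g : R -> R) : continuous f -> continuous g -> continuous (fun x => Num.min (f x) (g x)).
Proof. by move=> hf hg x; exact: (continuous_min (hf x) (hg x)). Qed.
Lemma cB (f g : R -> R) : continuous f -> continuous g -> continuous (fun x => f x - g x).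
Proof. by move=> hf hg; apply: cD => //; apply: cN. Qed.

Lemma cSum n (F : 'I_n -> R -> R) : (forall k, continuous (F k)) ->
  continuous (fun t => \sum_(k < n) F k t).
Proof.
elim: n F => [|n IH] F hF.
  by under eq_fun do rewrite big_ord0; apply: cC.
under eq_fun do rewrite big_ord_recr /=.
by apply: cD; [apply: (IH (fun k => F (widen_ord (leqnSn n) k))) | ].
Qed.

Lemma ReD (x y : C) : complex.Re (x + y) = complex.Re x + complex.Re y. Proof. by case: x; case: y. Qed.
Lemma ImD (x y : C) : complex.Im (x + y) = complex.Im x + complex.Im y. Proof. by case: x; case: y. Qed.
Lemma ReM (x y : C) : complex.Re (x * y) = complex.Re x * complex.Re y - complex.Im x * complex.Im y. Proof. by case: x; case: y. Qed.
Lemma ImM (x y : C) : complex.Im (x * y) = complex.Re x * complex.Im y + complex.Im x * complex.Re y. Proof. by case: x; case: y. Qed.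
Lemma Re_sum n (F : 'I_n -> C) : complex.Re (\sum_(k < n) F k) = \sum_(k < n) complex.Re (F k).
Proof. by apply: (big_morph _ ReD). Qed.
Lemma Im_sum n (F : 'I_n -> C) : complex.Im (\sum_(k < n) F k) = \sum_(k < n) complex.Im (F k).
Proof. by apply: (big_morph _ ImD). Qed.

Definition mxc (f : R -> 'M[C]_(2 * 3)) := forall i j : 'I_(2 * 3),
    continuous (fun t : R => complex.Re (f t i j)) /\ continuous (fun t : R => complex.Im (f t i j)).

Lemma mxc_const M : mxc (fun _ => M).
Proof. by move=> i j; split; apply: cC. Qed.

Lemma mxc_add f g : mxc f -> mxc g -> mxc (fun t => f t + g t).
Proof.
move=> hf hg i j; have [f1 f2] := hf i j; have [g1 g2] := hg i j.
split; under eq_fun do rewrite mxE ?ReD ?ImD; exact: cD.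
Qed.

Lemma mxc_mul f g : mxc f -> mxc g -> mxc (fun t => f t *m g t).
Proof.
move=> hf hg i j; split; under eq_fun do rewrite mxE ?Re_sum ?Im_sum;
  apply: cSum => k; have [f1 f2] := hf i k; have [g1 g2] := hg k j.
- under eq_fun do rewrite ReM; by apply: cB; apply: cM.
- under eq_fun do rewrite ImM; by apply: cD; apply: cM.
Qed.

Lemma mxc_scale (r : R -> R) f : continuous r -> mxc f ->
  mxc (fun t => toC (r t) *: f t).
Proof.
move=> hr hf i j; have [f1 f2] := hf i j; split.
- have -> : (fun t => complex.Re ((toC (r t) *: f t) i j)) =
     (fun t => r t * complex.Re (f t i j) - 0 * complex.Im (f t i j)).
    by apply: funext => t; rewrite mxE ReM.
  by apply: cB; apply: cM => //; exact: cC.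
- have -> : (fun t => complex.Im ((toC (r t) *: f t) i j)) =
     (fun t => r t * complex.Im (f t i j) + 0 * complex.Re (f t i j)).
    by apply: funext => t; rewrite mxE ImM.
  by apply: cD; apply: cM => //; exact: cC.
Qed.
End PartC.
Definition n1 : sp := [:: (1, 3, Negz 0); (4, 5, Negz 1)].
Definition n2 : sp := [:: (3, 1, Posz 1); (5, 4, Posz 1)].
Definition n4 : sp := [:: (5, 4, Posz 1)].
Definition tsh (N : sp) : ptab := tadd tid (tlin [::] N).
Definition tshm (N : sp) : ptab := tsub tid (tlin [::] N).
Definition TU : ptab := tmul (tmul (tmul (tsh n1) (tsh n2)) (tsh n1)) (tsh n4).
Definition TV : ptab := tmul (tmul (tmul (tshm n4) (tshm n1)) (tshm n2)) (tshm n1).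
Definition tfinal (d : eldata) : ptab := tmul (tmul TU (slotT d 22)) TV.
Definition chk_nil (N : sp) : bool := teqb (tmul (tlin N [::]) (tlin N [::])) tzero.
Definition chk_left (S : sp) : bool :=
  all (fun i => all (fun j => sget S i j ==
     (if (i %% 3)%N == (j %% 3)%N then sget S (3 * (i %/ 3))%N (3 * (j %/ 3))%N else 0)) (iota 0 6)) (iota 0 6).
Definition pval1 (p : poly) : int := foldr +%R 0 p.
Definition chk_right (T : ptab) : bool :=
  all (fun i => all (fun j => pval1 (tget T i j) ==
     (if (i %/ 3)%N == (j %/ 3)%N then pval1 (tget T (i %% 3)%N (j %% 3)%N) else 0)) (iota 0 6)) (iota 0 6).
Definition chk_el (d : eldata) : bool := chk_left d.1 && chk_right (tfinal d).

Section PartD.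
Variable R : realType.
Local Notation C := R[i].
Local Notation M := 'M[C]_(2 * 3).
Local Notation gmx := (@gmx R).
Local Notation mxev := (@mxev R).
Local Notation rho := (@rho R).

Definition Sh (x : R) (N : sp) : M := 1%:M + toC x *: gmx N.
Definition Uf (r : nat -> R) : M :=
  Sh (r 19%N) n1 *m Sh (r 20%N) n2 *m Sh (r 21%N) n1 *m Sh (r 22%N) n4.
Definition Vf (r : nat -> R) : M :=
  Sh (- r 22%N) n4 *m Sh (- r 21%N) n1 *m Sh (- r 20%N) n2 *m Sh (- r 19%N) n1.

Lemma nil2 N : chk_nil N -> gmx N *m gmx N = 0.
Proof.
rewrite /chk_nil => /(@mxev_eq R (toC 0)); rewrite mxev_mul !mxev_lin gmx_nil scaler0 addr0 mxev_zero.
by [].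
Qed.

Lemma Sh_inv x N : gmx N *m gmx N = 0 -> Sh (- x) N *m Sh x N = 1%:M.
Proof.
move=> hN; rewrite /Sh mulmxDl !mulmxDr !mul1mx !mulmx1 -scalemxAl -scalemxAr hN !scaler0 addr0.
by rewrite -addrA -scalerDl toCN subrr scale0r addr0.
Qed.

Lemma Sh_inv' x N : gmx N *m gmx N = 0 -> Sh x N *m Sh (- x) N = 1%:M.
Proof. by move=> hN; rewrite -{1}(opprK x) Sh_inv. Qed.

Lemma n1N : gmx n1 *m gmx n1 = 0. Proof. by apply: nil2; vm_compute. Qed.
Lemma n2N : gmx n2 *m gmx n2 = 0. Proof. by apply: nil2; vm_compute. Qed.
Lemma n4N : gmx n4 *m gmx n4 = 0. Proof. by apply: nil2; vm_compute. Qed.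

Lemma telescope (A1 A2 A3 A4 B1 B2 B3 B4 : M) :
  B1 *m A1 = 1%:M -> B2 *m A2 = 1%:M -> B3 *m A3 = 1%:M -> B4 *m A4 = 1%:M ->
  B4 *m B3 *m B2 *m B1 *m (A1 *m A2 *m A3 *m A4) = 1%:M.
Proof.
move=> h1 h2 h3 h4; rewrite !mulmxA -(mulmxA _ B1 A1) h1 mulmx1.
rewrite -(mulmxA _ B2 A2) h2 mulmx1 -(mulmxA _ B3 A3) h3 mulmx1 h4.
by [].
Qed.

Lemma VU r : Vf r *m Uf r = 1%:M.
Proof.
exact: (telescope (Sh_inv _ n1N) (Sh_inv _ n2N) (Sh_inv _ n1N) (Sh_inv _ n4N)).
Qed.

Lemma UV r : Uf r *m Vf r = 1%:M.
Proof.
exact: (telescope (Sh_inv' (r 22%N) n4N) (Sh_inv' (r 21%N) n1N)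
   (Sh_inv' (r 20%N) n2N) (Sh_inv' (r 19%N) n1N)).
Qed.

Definition cj r (X : M) : M := Uf r *m X *m Vf r.
Lemma cjM_gen (U V X Y : M) : V *m U = 1%:M ->
  U *m X *m V *m (U *m Y *m V) = U *m (X *m Y) *m V.
Proof. by move=> h; rewrite !mulmxA -(mulmxA _ V U) h mulmx1. Qed.
Lemma cjM r X Y : cj r X *m cj r Y = cj r (X *m Y).
Proof. exact: (cjM_gen X Y (VU r)). Qed.
Lemma cjD_gen (U V X Y : M) : U *m X *m V + U *m Y *m V = U *m (X + Y) *m V.
Proof. by rewrite -mulmxDl -mulmxDr. Qed.
Lemma cjD r X Y : cj r X + cj r Y = cj r (X + Y).
Proof. exact: cjD_gen. Qed.
Lemma cj1_gen (U V : M) : U *m V = 1%:M -> U *m 1%:M *m V = 1%:M.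
Proof. by rewrite mulmx1. Qed.
Lemma cj1 r : cj r 1%:M = 1%:M.
Proof. exact: (cj1_gen (UV r)). Qed.
Lemma cj0_gen (U V : M) : U *m 0 *m V = 0.
Proof. by rewrite mulmx0 mul0mx. Qed.
Lemma cj0 r : cj r 0 = 0.
Proof. exact: cj0_gen. Qed.

Definition eltf (d : eldata) (t : R) : M := cj (rho^~ t) (inner d (rho^~ t)).

Lemma mem_slot k : (k < NSLOT)%N -> k \in iota 0 NSLOT.
Proof. by move=> hk; rewrite mem_iota. Qed.

Lemma cue_gen (G H U E : M) : (G *m H - H *m G) *m (U *m E) = E ->
  G *m (H *m (U *m E)) = H *m (G *m (U *m E)) + E.
Proof.
move=> h; apply/eqP; rewrite addrC -subr_eq (mulmxA G H) (mulmxA H G) -mulmxBl h.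
by [].
Qed.

Lemma eltf_cue g h u e : chk_cue g h u e -> forall t,
  eltf g t *m (eltf h t *m (eltf u t *m eltf e t)) =
  eltf h t *m (eltf g t *m (eltf u t *m eltf e t)) + eltf e t.
Proof.
rewrite /chk_cue /chk_fu /chk_sum2 /chk_sum3 /allslots => /allP H t.
have [k [hk [l hs]]] := rho_slot t.
have hi := H k (mem_slot hk); move: hi => /= /(mxev_eq (toC l)).
rewrite !mxev_mul mxev_sub !mxev_mul -!(inner_slot _ hs) /eltf.
move: (rho^~ t) (inner g (rho^~ t)) (inner h (rho^~ t)) (inner u (rho^~ t))
  (inner e (rho^~ t)) => r G Hm U E hi.
by rewrite !cjM cjD (cue_gen hi).
Qed.

Lemma eltf_fu f u : chk_fu f u -> forall t, eltf f t *m eltf u t = 0.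
Proof.
rewrite /chk_cue /chk_fu /chk_sum2 /chk_sum3 /allslots => /allP H t.
have [k [hk [l hs]]] := rho_slot t.
have hi := H k (mem_slot hk); move: hi => /= /(mxev_eq (toC l)).
rewrite mxev_mul mxev_zero -!(inner_slot _ hs) /eltf.
move: (rho^~ t) (inner f (rho^~ t)) (inner u (rho^~ t)) => r F U hi.
by rewrite cjM hi cj0.
Qed.

Lemma eltf_sum2 a b : chk_sum2 a b -> forall t, eltf a t + eltf b t = 1%:M.
Proof.
rewrite /chk_cue /chk_fu /chk_sum2 /chk_sum3 /allslots => /allP H t.
have [k [hk [l hs]]] := rho_slot t.
have hi := H k (mem_slot hk); move: hi => /= /(mxev_eq (toC l)).
rewrite mxev_add mxev_id -!(inner_slot _ hs) /eltf.
move: (rho^~ t) (inner a (rho^~ t)) (inner b (rho^~ t)) => r X Y hi.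
by rewrite cjD hi cj1.
Qed.

Lemma eltf_sum3 a b c : chk_sum3 a b c -> forall t, eltf a t + eltf b t + eltf c t = 1%:M.
Proof.
rewrite /chk_cue /chk_fu /chk_sum2 /chk_sum3 /allslots => /allP H t.
have [k [hk [l hs]]] := rho_slot t.
have hi := H k (mem_slot hk); move: hi => /= /(mxev_eq (toC l)).
rewrite !mxev_add mxev_id -!(inner_slot _ hs) /eltf.
move: (rho^~ t) (inner a (rho^~ t)) (inner b (rho^~ t)) (inner c (rho^~ t)) => r X Y Z hi.
by rewrite !cjD hi cj1.
Qed.
End PartD.
Section PartE.
Variable R : realType.
Local Notation C := R[i].
Local Notation M := 'M[C]_(2 * 3).
Local Notation gmx := (@gmx R).
Local Notation mxev := (@mxev R).
Local Notation rho := (@rho R).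
Local Notation i2c := (@i2c R).
Local Notation eltf := (@eltf R).

Lemma rho_cont k : continuous (rho k).
Proof.
rewrite /rho /clamp; apply: cMax; first exact: cC.
apply: cMin; first exact: cC.
apply: cB; last exact: cC.
apply: cM; first exact: cC.
apply: cMax; first exact: cC.
by apply: cMin; [exact: cC | exact: cI].
Qed.

Lemma mxc_Sh (r : R -> R) N : continuous r -> mxc (fun t => Sh (r t) N).
Proof. by move=> hr; rewrite /Sh; apply: mxc_add; [exact: mxc_const | apply: mxc_scale => //; exact: mxc_const]. Qed.

Lemma mxc_Shr k N : mxc (fun t => Sh (rho^~ t k) N).
Proof.
have hc : continuous (rho k) by exact: rho_cont.
exact: (mxc_Sh (r := rho k) N hc).
Qed.
Lemma mxc_Shmr k N : mxc (fun t => Sh (- rho^~ t k) N).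
Proof.
have hc : continuous (fun t => - rho k t) by apply: cN; exact: rho_cont.
exact: (mxc_Sh (r := fun t => - rho k t) N hc).
Qed.

Lemma mxc_Uf : mxc (fun t => Uf (rho^~ t)).
Proof.
rewrite /Uf; apply: mxc_mul; last exact: mxc_Shr.
apply: mxc_mul; last exact: mxc_Shr.
by apply: mxc_mul; exact: mxc_Shr.
Qed.

Lemma mxc_Vf : mxc (fun t => Vf (rho^~ t)).
Proof.
rewrite /Vf; apply: mxc_mul; last exact: mxc_Shmr.
apply: mxc_mul; last exact: mxc_Shmr.
by apply: mxc_mul; exact: mxc_Shmr.
Qed.

Lemma mxc_inner d : mxc (fun t => inner d (rho^~ t)).
Proof.
rewrite /inner; apply: mxc_add; first exact: mxc_const.
elim: d.2 => [|p s IH].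
  have -> : (fun t => \sum_(q <- [::]) toC (rho q.1 t) *: gmx q.2) = (fun _ => 0).
    by apply: funext => t; rewrite big_nil.
  exact: mxc_const.
have -> : (fun t => \sum_(q <- p :: s) toC (rho q.1 t) *: gmx q.2) =
  (fun t => toC (rho p.1 t) *: gmx p.2 + \sum_(q <- s) toC (rho q.1 t) *: gmx q.2).
  by apply: funext => t; rewrite big_cons.
apply: mxc_add => //; apply: mxc_scale; [exact: rho_cont | exact: mxc_const].
Qed.

Lemma mxc_eltf d : mxc (eltf d).
Proof.
rewrite /eltf /cj; apply: mxc_mul; last exact: mxc_Vf.
by apply: mxc_mul; [exact: mxc_Uf | exact: mxc_inner].
Qed.

Lemma eltf_le0 d t : t <= 0 -> eltf d t = eltf d 0.
Proof.
move=> ht; have E : rho^~ t = rho^~ 0.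
  by apply: funext => k; rewrite /rho !(@clamp_le0 R t) ?(@clamp_le0 R 0).
by rewrite /eltf E.
Qed.

Lemma eltf_ge1 d t : 1 <= t -> eltf d t = eltf d 1.
Proof.
move=> ht; have E : rho^~ t = rho^~ 1.
  by apply: funext => k; rewrite /rho !(@clamp_ge1 R t) ?(@clamp_ge1 R 1).
by rewrite /eltf E.
Qed.

Lemma rho0 k : rho k 0 = 0.
Proof.
rewrite /rho (@clamp_le0 R 0) // mulr0 sub0r; apply: clamp_le0.
by rewrite oppr_le0.
Qed.

Lemma Sh0 N : Sh (0 : R) N = 1%:M.
Proof. by rewrite /Sh toC0 scale0r addr0. Qed.

Lemma eltf0 d : eltf d 0 = gmx d.1.
Proof.
have E : rho^~ 0 = (fun _ => 0) by apply: funext => k; rewrite rho0.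
rewrite /eltf E /cj /Uf /Vf oppr0 !Sh0 !mul1mx mulmx1 /inner big1 ?addr0 //.
by move=> p _; rewrite toC0 scale0r.
Qed.

Lemma rho1 : slotted (rho^~ 1) 22 1.
Proof.
move=> j; rewrite /rho (@clamp_ge1 R 1) // mulr1.
case: (ltngtP j 22) => hj.
- apply: clamp_ge1; rewrite lerBrDr addrC natr1 ler_nat.
  by apply: leq_trans hj _.
- apply: clamp_le0; rewrite subr_le0 ler_nat; exact: hj.
- by rewrite hj; apply: clamp_ge1; rewrite lerBrDr addrC natr1 ler_nat.
Qed.

Lemma Sh1 N : Sh (1 : R) N = mxev (toC 1) (tsh N).
Proof. by rewrite /tsh mxev_add mxev_id mxev_lin gmx_nil add0r. Qed.
Lemma Shm1 N : Sh (- 1 : R) N = mxev (toC 1) (tshm N).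
Proof. by rewrite /tshm mxev_sub mxev_id mxev_lin gmx_nil add0r /Sh toCN scaleNr. Qed.

Lemma eltf1 d : eltf d 1 = mxev (toC 1) (tfinal d).
Proof.
have hs := rho1.
have h19 : rho 19 1 = 1 by rewrite hs.
have h20 : rho 20 1 = 1 by rewrite hs.
have h21 : rho 21 1 = 1 by rewrite hs.
have h22 : rho 22 1 = 1 by rewrite hs.
rewrite /eltf /cj (inner_slot _ hs) /Uf /Vf h19 h20 h21 h22 !Sh1 !Shm1.
by rewrite /tfinal /TU /TV !mxev_mul.
Qed.

Lemma peval_one p : peval (toC (1 : R)) p = i2c (pval1 p).
Proof.
elim: p => [|c p IH] /=; first by [].
by rewrite IH toC1 mul1r /i2c intrD.
Qed.

Lemma mxtens_val (a : 'I_2) (b : 'I_3) : (mxtens_index (a, b) : nat) = (a * 3 + b)%N.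
Proof. by []. Qed.

Lemma idx_mod (a : 'I_2) (b : 'I_3) : ((a * 3 + b) %% 3 = b)%N.
Proof. by rewrite modnMDl modn_small. Qed.
Lemma idx_div (a : 'I_2) (b : 'I_3) : ((a * 3 + b) %/ 3 = a)%N.
Proof. by rewrite divnMDl // divn_small ?addn0. Qed.
Lemma idx_in (a : 'I_2) (b : 'I_3) : (a * 3 + b)%N \in iota 0 6.
Proof.
rewrite mem_iota /= add0n.
by case: a => [[|[|//]] ?]; case: b => [[|[|[|//]]] ?].
Qed.

Lemma left_ok S : chk_left S ->
  gmx S = (\matrix_(a < 2, b < 2) i2c (sget S (3 * a) (3 * b))) *t (1%:M : 'M[C]_3).
Proof.
move=> /allP H; apply/matrixP => i j.
case (@mxtens_indexP 2 3 i) => [a b] {i}; case (@mxtens_indexP 2 3 j) => [a' b'] {j}.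
rewrite tensmxE !mxE !mxtens_val.
have /allP H' := H _ (idx_in a b).
move: (H' _ (idx_in a' b')) => /eqP ->.
rewrite !idx_mod !idx_div.
case: (b =P b') => [<-|hne]; first by rewrite !eqxx mulr1.
have -> : ((b : nat) == b') = false by apply/eqP => /val_inj.
by rewrite mulr0 /i2c.
Qed.

Lemma right_ok T : chk_right T ->
  mxev (toC 1) T = (1%:M : 'M[C]_2) *t (\matrix_(a < 3, b < 3) i2c (pval1 (tget T a b))).
Proof.
move=> /allP H; apply/matrixP => i j.
case (@mxtens_indexP 2 3 i) => [a b] {i}; case (@mxtens_indexP 2 3 j) => [a' b'] {j}.
rewrite tensmxE !mxE !mxtens_val peval_one.
have /allP H' := H _ (idx_in a b).
move: (H' _ (idx_in a' b')) => /eqP ->.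
rewrite !idx_mod !idx_div.
case: (a =P a') => [<-|hne]; first by rewrite !eqxx mul1r.
have -> : ((a : nat) == a') = false by apply/eqP => /val_inj.
by rewrite mul0r /i2c.
Qed.
End PartE.
Section FinalAlg.
Variable T : pzRingType.
Lemma term_ok (g h u e f a : T) : f * u = 0 ->
  (g * h - h * g) * (u * e) = e ->
  commr g h * commr u (e * a * f) = e * a * f.
Proof.
move=> hfu hc; rewrite /commr.
have -> : e * a * f * u = 0 by rewrite -mulrA hfu mulr0.
rewrite subr0 !mulrA.
have -> : (g * h - h * g) * u * e = e by rewrite -mulrA hc.
by [].
Qed.

Lemma final_alg (e1 e2 f11 f12 f21 f22 f23 g11 h11 u11 g12 h12 u12
   g21 h21 u21 g22 h22 u22 g23 h23 u23 : T) :
  e1 + e2 = 1 -> f11 + f12 = 1 -> f21 + f22 + f23 = 1 ->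
  f11 * u11 = 0 -> f12 * u12 = 0 -> f21 * u21 = 0 -> f22 * u22 = 0 -> f23 * u23 = 0 ->
  (g11 * h11 - h11 * g11) * (u11 * e1) = e1 ->
  (g12 * h12 - h12 * g12) * (u12 * e1) = e1 ->
  (g21 * h21 - h21 * g21) * (u21 * e2) = e2 ->
  (g22 * h22 - h22 * g22) * (u22 * e2) = e2 ->
  (g23 * h23 - h23 * g23) * (u23 * e2) = e2 ->
  xi_le T 6.
Proof.
move=> he hf1 hf2 q11 q12 q21 q22 q23 c11 c12 c21 c22 c23 a.
exists (fun k : 'I_6 => nth 0 [:: g11; g12; g21; g22; g23; 0] k).
exists (fun k : 'I_6 => nth 0 [:: h11; h12; h21; h22; h23; 0] k).
exists (fun k : 'I_6 => nth 0 [:: u11; u12; u21; u22; u23; 0] k).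
exists (fun k : 'I_6 => nth 0 [:: e1 * a * f11; e1 * a * f12; e2 * a * f21;
                                e2 * a * f22; e2 * a * f23; 0] k).
rewrite !big_ord_recr big_ord0 /= add0r.
rewrite !term_ok // /commr !mulr0 subrr mulr0 addr0.
rewrite -(mulrDr (e1 * a) f11 f12) hf1 mulr1 -!addrA -(mulrDr (e2 * a) f22 f23).
rewrite -(mulrDr (e2 * a) f21) addrA hf2 mulr1 -mulrDl he mul1r.
by [].
Qed.
End FinalAlg.
Section PartG.
Variable R : realType.
Local Notation C := R[i].
Local Notation eltf := (@eltf R).

Lemma in_Z23_eltf d : chk_el d -> in_Z23 (eltf d).
Proof.
move=> /andP [hl hr]; split.
- exact: mxc_eltf.
- by move=> t ht; apply: eltf_le0.
- by move=> t ht; apply: eltf_ge1.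
- by eexists; rewrite eltf0; exact: left_ok hl.
- by eexists; rewrite eltf1; exact: right_ok hr.
Qed.

Lemma in_Z23_mul (f g : R -> Mx6 R) : in_Z23 f -> in_Z23 g -> in_Z23 (Zmul f g).
Proof.
case=> cf f0 f1 [a fa] [b fb]; case=> cg g0 g1 [a' ga] [b' gb]; split.
- exact: mxc_mul cf cg.
- by move=> t ht; rewrite /Zmul f0 // g0.
- by move=> t ht; rewrite /Zmul f1 // g1.
- by exists (a *m a'); rewrite /Zmul fa ga tensmx_mul mulmx1.
- by exists (b *m b'); rewrite /Zmul fb gb tensmx_mul mulmx1.
Qed.

Lemma tensDl m n p q (A B : 'M[C]_(m, n)) (D : 'M[C]_(p, q)) : (A + B) *t D = A *t D + B *t D.
Proof. by apply/matrixP => i j; rewrite !mxE mulrDl. Qed.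
Lemma tensDr m n p q (A : 'M[C]_(m, n)) (B D : 'M[C]_(p, q)) : A *t (B + D) = A *t B + A *t D.
Proof. by apply/matrixP => i j; rewrite !mxE mulrDr. Qed.

Lemma in_Z23_add (f g : R -> Mx6 R) : in_Z23 f -> in_Z23 g -> in_Z23 (Zadd f g).
Proof.
case=> cf f0 f1 [a fa] [b fb]; case=> cg g0 g1 [a' ga] [b' gb]; split.
- exact: mxc_add cf cg.
- by move=> t ht; rewrite /Zadd f0 // g0.
- by move=> t ht; rewrite /Zadd f1 // g1.
- by exists (a + a'); rewrite /Zadd fa ga tensDl.
- by exists (b + b'); rewrite /Zadd fb gb tensDr.
Qed.

Lemma in_Z23_zero : in_Z23 (fun _ : R => (0 : Mx6 R)).
Proof.
split.
- exact: mxc_const.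
- by [].
- by [].
- by exists 0; rewrite tens0mx.
- by exists 0; rewrite tensmx0.
Qed.

Variable A : pzRingType.
Variable phi : (R -> Mx6 R) -> A.
Hypothesis hadd : forall f g, in_Z23 f -> in_Z23 g -> phi (Zadd f g) = phi f + phi g.
Hypothesis hmul : forall f g, in_Z23 f -> in_Z23 g -> phi (Zmul f g) = phi f * phi g.
Hypothesis hone : phi (@Zone R) = 1.

Lemma phi0 : phi (fun _ => 0) = 0.
Proof.
have h := hadd in_Z23_zero in_Z23_zero.
have E : Zadd (fun _ : R => (0 : Mx6 R)) (fun _ => 0) = (fun _ => 0).
  by apply: funext => t; rewrite /Zadd addr0.
rewrite E in h.
have := congr1 (fun y => y - phi (fun _ => 0)) h.
by rewrite subrr addrK => <-.
Qed.

Lemma rel_sum2 (X Y : R -> Mx6 R) : in_Z23 X -> in_Z23 Y ->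
  (forall t, X t + Y t = 1%:M) -> phi X + phi Y = 1.
Proof.
move=> zx zy hs; rewrite -(hadd zx zy) -hone; congr phi.
by apply: funext => t; exact: hs.
Qed.

Lemma rel_sum3 (X Y Z : R -> Mx6 R) : in_Z23 X -> in_Z23 Y -> in_Z23 Z ->
  (forall t, X t + Y t + Z t = 1%:M) -> phi X + phi Y + phi Z = 1.
Proof.
move=> zx zy zz hs.
rewrite -(hadd zx zy) -(hadd (in_Z23_add zx zy) zz) -hone; congr phi.
by apply: funext => t; exact: hs.
Qed.

Lemma rel_fu (F U : R -> Mx6 R) : in_Z23 F -> in_Z23 U ->
  (forall t, F t *m U t = 0) -> phi F * phi U = 0.
Proof.
move=> zf zu hs; rewrite -(hmul zf zu) -phi0; congr phi.
by apply: funext => t; exact: hs.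
Qed.

Lemma rel_cue (G H U E : R -> Mx6 R) : in_Z23 G -> in_Z23 H -> in_Z23 U -> in_Z23 E ->
  (forall t, G t *m (H t *m (U t *m E t)) = H t *m (G t *m (U t *m E t)) + E t) ->
  (phi G * phi H - phi H * phi G) * (phi U * phi E) = phi E.
Proof.
move=> zg zh zu ze hs.
have zue := in_Z23_mul zu ze.
have zhue := in_Z23_mul zh zue; have zgue := in_Z23_mul zg zue.
have zghue := in_Z23_mul zg zhue; have zhgue := in_Z23_mul zh zgue.
have key : phi (Zmul G (Zmul H (Zmul U E))) = phi (Zadd (Zmul H (Zmul G (Zmul U E))) E).
  by congr phi; apply: funext => t; exact: hs.
move: key; rewrite (hadd zhgue ze) (hmul zg zhue) (hmul zh zue) (hmul zh zgue) (hmul zg zue) (hmul zu ze) => key.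
by rewrite mulrBl -!mulrA key addrC addKr.
Qed.
End PartG.

Unset Implicit Arguments. Set Strict Implicit.

Theorem theorem6p4 (R : realType) (A : algType R[i]) (st : A -> A) (nrm : A -> R) :
  is_unital_Cstar_algebra st nrm ->
  (exists phi : (R -> Mx6 R) -> A, unital_star_hom_from_Z23 st phi) ->
  xi_le A 6.
Proof.
move=> _ [phi [hadd hmul _ _ hone]].
have z_e1 : in_Z23 (@eltf R d_e1) by apply: in_Z23_eltf; vm_compute.
have z_e2 : in_Z23 (@eltf R d_e2) by apply: in_Z23_eltf; vm_compute.
have z_f11 : in_Z23 (@eltf R d_f11) by apply: in_Z23_eltf; vm_compute.
have z_f12 : in_Z23 (@eltf R d_f12) by apply: in_Z23_eltf; vm_compute.
have z_f21 : in_Z23 (@eltf R d_f21) by apply: in_Z23_eltf; vm_compute.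
have z_f22 : in_Z23 (@eltf R d_f22) by apply: in_Z23_eltf; vm_compute.
have z_f23 : in_Z23 (@eltf R d_f23) by apply: in_Z23_eltf; vm_compute.
have z_u11 : in_Z23 (@eltf R d_u11) by apply: in_Z23_eltf; vm_compute.
have z_u12 : in_Z23 (@eltf R d_u12) by apply: in_Z23_eltf; vm_compute.
have z_u21 : in_Z23 (@eltf R d_u21) by apply: in_Z23_eltf; vm_compute.
have z_u22 : in_Z23 (@eltf R d_u22) by apply: in_Z23_eltf; vm_compute.
have z_u23 : in_Z23 (@eltf R d_u23) by apply: in_Z23_eltf; vm_compute.
have z_g11 : in_Z23 (@eltf R d_g11) by apply: in_Z23_eltf; vm_compute.
have z_h11 : in_Z23 (@eltf R d_h11) by apply: in_Z23_eltf; vm_compute.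
have z_g12 : in_Z23 (@eltf R d_g12) by apply: in_Z23_eltf; vm_compute.
have z_h12 : in_Z23 (@eltf R d_h12) by apply: in_Z23_eltf; vm_compute.
have z_g21 : in_Z23 (@eltf R d_g21) by apply: in_Z23_eltf; vm_compute.
have z_h21 : in_Z23 (@eltf R d_h21) by apply: in_Z23_eltf; vm_compute.
have z_g22 : in_Z23 (@eltf R d_g22) by apply: in_Z23_eltf; vm_compute.
have z_h22 : in_Z23 (@eltf R d_h22) by apply: in_Z23_eltf; vm_compute.
have z_g23 : in_Z23 (@eltf R d_g23) by apply: in_Z23_eltf; vm_compute.
have z_h23 : in_Z23 (@eltf R d_h23) by apply: in_Z23_eltf; vm_compute.
have cs1 : chk_sum2 d_e1 d_e2 by vm_compute.
have cs2 : chk_sum2 d_f11 d_f12 by vm_compute.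
have cs3 : chk_sum3 d_f21 d_f22 d_f23 by vm_compute.
have cf11 : chk_fu d_f11 d_u11 by vm_compute.
have cc11 : chk_cue d_g11 d_h11 d_u11 d_e1 by vm_compute.
have cf12 : chk_fu d_f12 d_u12 by vm_compute.
have cc12 : chk_cue d_g12 d_h12 d_u12 d_e1 by vm_compute.
have cf21 : chk_fu d_f21 d_u21 by vm_compute.
have cc21 : chk_cue d_g21 d_h21 d_u21 d_e2 by vm_compute.
have cf22 : chk_fu d_f22 d_u22 by vm_compute.
have cc22 : chk_cue d_g22 d_h22 d_u22 d_e2 by vm_compute.
have cf23 : chk_fu d_f23 d_u23 by vm_compute.
have cc23 : chk_cue d_g23 d_h23 d_u23 d_e2 by vm_compute.
apply: (@final_alg A (phi (@eltf R d_e1)) (phi (@eltf R d_e2)) (phi (@eltf R d_f11)) (phi (@eltf R d_f12)) (phi (@eltf R d_f21)) (phi (@eltf R d_f22)) (phi (@eltf R d_f23)) (phi (@eltf R d_g11)) (phi (@eltf R d_h11)) (phi (@eltf R d_u11)) (phi (@eltf R d_g12)) (phi (@eltf R d_h12)) (phi (@eltf R d_u12)) (phi (@eltf R d_g21)) (phi (@eltf R d_h21)) (phi (@eltf R d_u21)) (phi (@eltf R d_g22)) (phi (@eltf R d_h22)) (phi (@eltf R d_u22)) (phi (@eltf R d_g23)) (phi (@eltf R d_h23)) (phi (@eltf R d_u23))).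
- exact: (rel_sum2 hadd hone z_e1 z_e2 (eltf_sum2 cs1)).
- exact: (rel_sum2 hadd hone z_f11 z_f12 (eltf_sum2 cs2)).
- exact: (rel_sum3 hadd hone z_f21 z_f22 z_f23 (eltf_sum3 cs3)).
- exact: (rel_fu hadd hmul z_f11 z_u11 (eltf_fu cf11)).
- exact: (rel_fu hadd hmul z_f12 z_u12 (eltf_fu cf12)).
- exact: (rel_fu hadd hmul z_f21 z_u21 (eltf_fu cf21)).
- exact: (rel_fu hadd hmul z_f22 z_u22 (eltf_fu cf22)).
- exact: (rel_fu hadd hmul z_f23 z_u23 (eltf_fu cf23)).
- exact: (rel_cue hadd hmul z_g11 z_h11 z_u11 z_e1 (eltf_cue cc11)).
- exact: (rel_cue hadd hmul z_g12 z_h12 z_u12 z_e1 (eltf_cue cc12)).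
- exact: (rel_cue hadd hmul z_g21 z_h21 z_u21 z_e2 (eltf_cue cc21)).
- exact: (rel_cue hadd hmul z_g22 z_h22 z_u22 z_e2 (eltf_cue cc22)).
- exact: (rel_cue hadd hmul z_g23 z_h23 z_u23 z_e2 (eltf_cue cc23)).
Qed.
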